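(* Let $G$ be a connected graph, let $(u,v)\in V_p$, and let $R\subseteq V(G)$ be any resolving set for $G$. (1) If $r_w(u,v)=0$ for all $w\in V(G)\setminus\{u,v\}$, then $u\in R$ or $v\in R$. (2) If $r_w(u,v)=\frac12$ for some $w\in V(G)$, then $u\in R$ or $v\in R$.
   Context: Graphs are finite, simple and connected; $d(u,v)$ denotes the shortest-path distance. $V_p$ denotes the set of all unordered pairs $(u,v)$ of distinct vertices. A vertex $x$ resolves the pair $(u,v)$ if $d(x,u)\neq d(x,v)$. A set $R\subseteq V(G)$ is a resolving set for $G$ if every pair of distinct vertices of $G$ is resolved by some element of $R$. For $(u,v)\in V_p$, $R(u,v)$ is the set of all vertices resolving $(u,v)$. The resolving share of a vertex $w$ for $(u,v)$ is $r_w(u,v)=\frac{1}{|R(u,v)|}$ if $w$ resolves $u$ and $v$, and $r_w(u,v)=0$ otherwise. *)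

(* Defs.v *)
From mathcomp Require Import all_boot all_order all_algebra.
Set Implicit Arguments. Unset Strict Implicit. Unset Printing Implicit Defensive.
Import GRing.Theory Num.Theory.

Definition simple_graph (T : finType) (e : rel T) : Prop :=
  symmetric e /\ irreflexive e.

Fixpoint reach (T : finType) (e : rel T) (n : nat) (x y : T) : bool :=
  match n with
  | 0 => x == y
  | n'.+1 => reach e n' x y || [exists z, reach e n' x z && e z y]
  end.

Definition connected_graph (T : finType) (e : rel T) : Prop :=
  forall x y : T, exists n, reach e n x y.

(* Shortest-path distance: the least n such that y is reachable from x
   within n steps (a shortest path has at most #|T| - 1 edges, so searching
   n in 0 .. #|T|-1 suffices in a connected graph). *)
Definition dist (T : finType) (e : rel T) (x y : T) : nat :=
  find (fun n => reach e n x y) (iota 0 #|T|).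

Definition resolves (T : finType) (e : rel T) (x u v : T) : bool :=
  dist e x u != dist e x v.

Definition resolving_set (T : finType) (e : rel T) (R : {set T}) : Prop :=
  forall u v : T, u != v -> exists2 x, x \in R & resolves e x u v.

Definition resolvers (T : finType) (e : rel T) (u v : T) : {set T} :=
  [set x | resolves e x u v].

Definition rshare (T : finType) (e : rel T) (w u v : T) : rat :=
  if resolves e w u v then ((#|resolvers e u v|%:R)^-1)%R else 0%R.

(* Main.v *)
Require Import Defs.
From mathcomp Require Import all_boot all_order all_algebra.
Import GRing.Theory Num.Theory.
Local Open Scope ring_scope.

Lemma dist_self (T : finType) (e : rel T) (u : T) : dist e u u = 0%N.
Proof.
rewrite /dist; have : (0 < #|T|)%N by apply/card_gt0P; exists u.
by case: #|T| => [|n] //= _; rewrite eqxx.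
Qed.

Lemma dist_neq (T : finType) (e : rel T) (u v : T) : u != v -> dist e u v != 0%N.
Proof.
move=> uv; rewrite /dist; have : (0 < #|T|)%N by apply/card_gt0P; exists u.
by case: #|T| => [|n] //= _; rewrite (negbTE uv).
Qed.

Lemma res_u (T : finType) (e : rel T) (u v : T) : u != v -> u \in resolvers e u v.
Proof. by move=> uv; rewrite inE /resolves dist_self eq_sym dist_neq. Qed.

Lemma res_v (T : finType) (e : rel T) (u v : T) : u != v -> v \in resolvers e u v.
Proof. by move=> uv; rewrite inE /resolves dist_self dist_neq // eq_sym. Qed.

Theorem lemma2p9 (T : finType) (e : rel T) (u v : T) (R : {set T}) :
  simple_graph e -> connected_graph e -> u != v -> resolving_set e R ->
  ((forall w : T, w != u -> w != v -> rshare e w u v = 0) ->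
     u \in R \/ v \in R) /\
  ((exists w : T, rshare e w u v = 1 / 2) -> u \in R \/ v \in R).
Proof.
move=> _ _ uv HR.
have [x xR xres] := HR u v uv.
have xin : x \in resolvers e u v by rewrite inE.
have key : (x == u) || (x == v) -> u \in R \/ v \in R.
  by case/orP=> /eqP <-; [left|right].
split.
- move=> H; apply: key; apply/negPn/negP; rewrite negb_or => /andP[xu xv].
  have := H x xu xv; rewrite /rshare xres => /eqP; rewrite invr_eq0 pnatr_eq0.
  by move/eqP/card0_eq => /(_ x); rewrite xin.
- case=> w; rewrite /rshare; case: ifP => _; last first.
    by move/eqP; rewrite eq_sym mulf_eq0 oner_eq0 invr_eq0 pnatr_eq0.
  move=> H.
  have c2 : #|resolvers e u v| = 2%N.
    have : ((#|resolvers e u v|%:R : rat) = 2).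
      by rewrite -[LHS]invrK H mul1r invrK.
    by move/eqP; rewrite (eqr_nat rat _ 2) => /eqP.
  apply: key; apply/negPn/negP; rewrite negb_or => /andP[xu xv].
  have sub : [set u; v; x] \subset resolvers e u v.
    apply/subsetP=> y H3; rewrite !inE in H3.
    have Hu := @res_u _ e _ _ uv; have Hv := @res_v _ e _ _ uv.
    case/orP: H3 => [/orP[]|]; move/eqP=> ->; done.
  have := subset_leq_card sub; rewrite c2.
  rewrite -setUA cardsU1 cardsU1 cards1 !inE (negbTE uv) eq_sym (negbTE xu).
  by rewrite eq_sym (negbTE xv).
Qed.
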